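(* Let $g\geq 3$, $d=2g+1$ and $h=\lfloor\log_2(g+1)+1\rfloor$. Let $r\geq 1$ and let $\mathbf k={}^t(k_1,\dots,k_d)\in\mathbf K_r$. Then $s(\mathbf k)\geq\lceil s(r)/h\rceil$. If moreover $s(\mathbf k)=s(r)/h$, then: 1) every entry $\dot k_{\ell,v}$ ($1\le\ell\le d$, $v\ge0$) of the $2$-adic box of $\mathbf k$ is $0$ or $1$; 2) exactly $s(r)/h$ of the entries $\dot k_{1,v}$ ($v\geq 0$) are equal to $1$ and the others are $0$; 3) for every $v\geq 0$, $s\big(\sum_{\ell=1}^d\dot k_{\ell,v}\big)$ equals $0$ or $h$.
   Context: For a nonnegative integer $m$, $s(m)$ is the sum of the binary digits of $m$. For $r\ge0$, $\mathbf K_r=\{{}^t(k_1,\dots,k_d)\in\mathbb Z^d: k_1\geq k_2\geq\cdots\geq k_d\geq 0,\ \sum_{\ell=1}^d k_\ell=r\}$. For $\mathbf k\in\mathbf K_r$ put $s(\mathbf k)=s(k_1-k_2)+s(k_2-k_3)+\cdots+s(k_{d-1}-k_d)+s(k_d)$. The dot representation (2-adic box) of $\mathbf k$ is the array of integers $\dot k_{\ell,v}$ ($1\le \ell\le d$, $v\ge 0$) defined by: $\dot k_{d,v}$ is the $2^v$-coefficient of the binary expansion of $k_d$; and for $1<\ell\le d$, $\dot k_{\ell-1,v}=\dot k_{\ell,v}+(\text{the }2^v\text{-coefficient of the binary expansion of }k_{\ell-1}-k_\ell)$. Then $k_\ell=\sum_v\dot k_{\ell,v}2^v$ and $s(\mathbf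 k)=\sum_v \dot k_{1,v}$. *)

(* Defs.v *)
From mathcomp Require Import all_boot.
Set Implicit Arguments. Unset Strict Implicit. Unset Printing Implicit Defensive.

Definition bdigit (m v : nat) : nat := odd (m %/ 2 ^ v).

(* s(m): sum of binary digits of m.  Digits of index >= m vanish since m < 2^m. *)
Definition s (m : nat) : nat := \sum_(v < m) bdigit m v.

(* A vector k = t(k_1,...,k_d) is represented by k : nat -> nat, only the values
   at 1..d mattering; kext d k extends it by k_l = 0 for l > d (so k_{d+1} = 0). *)
Definition kext (d : nat) (k : nat -> nat) (l : nat) : nat :=
  if l <= d then k l else 0.

Definition inK (d r : nat) (k : nat -> nat) : Prop :=
  (forall l, 1 <= l < d -> k l.+1 <= k l) /\ \sum_(1 <= l < d.+1) k l = r.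

Definition sk (d : nat) (k : nat -> nat) : nat :=
  \sum_(1 <= l < d.+1) s (kext d k l - kext d k l.+1).

(* dot representation: dot_{d,v} = digit of k_d, and
   dot_{l-1,v} = dot_{l,v} + digit of (k_{l-1} - k_l); unfolded:
   dot_{l,v} = sum_{j=l}^{d} digit_v (k_j - k_{j+1}) with k_{d+1} = 0. *)
Definition kdot (d : nat) (k : nat -> nat) (l v : nat) : nat :=
  \sum_(l <= j < d.+1) bdigit (kext d k j - kext d k j.+1) v.

(* Main.v *)
Require Import Defs.
From mathcomp Require Import all_boot zify.

Lemma bdigit_big m v : m < 2 ^ v -> bdigit m v = 0.
Proof. by move=> H; rewrite /bdigit divn_small. Qed.

Lemma sN m N : m <= N -> s m = \sum_(0 <= v < N) bdigit m v.
Proof.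
move=> mN; rewrite /s -(big_mkord xpredT (fun v => bdigit m v)).
rewrite (big_cat_nat (leq0n m) mN) /=.
rewrite [X in _ = _ + X]big1_seq ?addn0 // => v; rewrite mem_index_iota => /andP[_ /andP[hv _]].
apply: bdigit_big; apply: leq_trans (ltn_expl m (isT : 1 < 2)) _.
by rewrite leq_exp2l.
Qed.

Lemma sS m : s m = odd m + s m./2.
Proof.
rewrite (@sN m m.+1) // big_nat_recl // (@sN m./2 m); last first.
  by rewrite -divn2 leq_div.
congr (_ + _); first by rewrite /bdigit expn0 divn1.
apply: eq_bigr => v _; by rewrite /bdigit expnS divnMA divn2.
Qed.

Lemma s0 : s 0 = 0. Proof. by rewrite /s big_ord0. Qed.

Lemma s_dbl m : s (m.*2) = s m.
Proof. by rewrite sS odd_double doubleK. Qed.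

Lemma s_dbl1 m : s (m.*2.+1) = (s m).+1.
Proof. by rewrite sS /= odd_double /= uphalf_double. Qed.

Lemma s_pow v x : s (2 ^ v * x) = s x.
Proof.
elim: v => [|v IH]; first by rewrite mul1n.
by rewrite expnS -mulnA mul2n s_dbl.
Qed.

Lemma s_decomp m : (odd m /\ m = (m./2).*2.+1) \/ (~~ odd m /\ m = (m./2).*2).
Proof. case: (boolP (odd m)) => h; [left|right]; split => //; lia. Qed.

Lemma s_add1 n : s n.+1 <= (s n).+1.
Proof.
elim: n {-2}n (leqnn n) => [|N IH] n hn.
  by move: hn; rewrite leqn0 => /eqP->; rewrite s0 /s big_ord_recl big_ord0 /bdigit.
case: (s_decomp n) => [[ho ->]|[ho ->]].
- have -> : (n./2).*2.+2 = (n./2).+1.*2 by lia.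
  rewrite !s_dbl s_dbl1; apply: leqW; apply: IH; lia.
- by rewrite s_dbl s_dbl1.
Qed.

Lemma s_sub a b : s (a + b) <= s a + s b.
Proof.
elim: a {-2}a (leqnn a) b => [|N IH] a ha b.
  by move: ha; rewrite leqn0 => /eqP->; rewrite s0.
case: (s_decomp a) => [[ho ea]|[ho ea]]; case: (s_decomp b) => [[hob eb]|[hob eb]];
  rewrite ea eb.
- have -> : (a./2).*2.+1 + (b./2).*2.+1 = (a./2 + b./2).+1.*2 by lia.
  rewrite s_dbl !s_dbl1; apply: leq_trans (s_add1 _) _.
  have := IH a./2 ltac:(lia) b./2; lia.
- have -> : (a./2).*2.+1 + (b./2).*2 = (a./2 + b./2).*2.+1 by lia.
  rewrite s_dbl !s_dbl1; have := IH a./2 ltac:(lia) b./2; lia.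
- have -> : (a./2).*2 + (b./2).*2.+1 = (a./2 + b./2).*2.+1 by lia.
  rewrite !s_dbl !s_dbl1; have := IH a./2 ltac:(lia) b./2; lia.
- case: (posnP a) => [a0|apos].
    by rewrite -ea a0 s0.
  have -> : (a./2).*2 + (b./2).*2 = (a./2 + b./2).*2 by lia.
  rewrite !s_dbl; apply: IH; lia.
Qed.

Lemma s_sum (I : Type) (r : seq I) (P : pred I) (F : I -> nat) :
  s (\sum_(i <- r | P i) F i) <= \sum_(i <- r | P i) s (F i).
Proof.
apply: (big_ind2 (fun x y => s x <= y)); first by rewrite s0.
  move=> x1 x2 y1 y2 h1 h2; apply: leq_trans (s_sub _ _) _; exact: leq_add.
by [].
Qed.

Lemma s_boundA n x : x < 2 ^ n -> s x <= n.
Proof.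
elim: n x => [|n IH] x hx.
  by move: hx; rewrite expn0 ltnS leqn0 => /eqP->; rewrite s0.
rewrite sS; have := IH x./2; rewrite expnS in hx.
have: odd x <= 1 by case: (odd x).
move=> h1 h2; have := h2 ltac:(lia); lia.
Qed.

Lemma s_boundB n x : x.+1 < 2 ^ n.+1 -> s x <= n.
Proof.
elim: n x => [|n IH] x hx.
  have -> : x = 0 by move: hx; rewrite expn1; lia.
  by rewrite s0.
rewrite expnS in hx.
case: (s_decomp x) => [[ho ex]|[ho ex]]; rewrite ex.
- rewrite s_dbl1 ltnS; apply: IH; lia.
- rewrite s_dbl; apply: s_boundA; lia.
Qed.

Lemma binexp N m : m < 2 ^ N -> m = \sum_(0 <= v < N) 2 ^ v * bdigit m v.
Proof.
elim: N m => [|N IH] m hm.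
  by move: hm; rewrite expn0 ltnS leqn0 => /eqP->; rewrite big_geq.
rewrite big_nat_recl //.
rewrite /bdigit expn0 divn1 mul1n.
have -> : \sum_(0 <= i < N) 2 ^ i.+1 * odd (m %/ 2 ^ i.+1) =
          2 * \sum_(0 <= i < N) 2 ^ i * bdigit (m./2) i.
  rewrite big_distrr /=; apply: eq_bigr => i _.
  by rewrite /bdigit expnS divnMA divn2 mulnA.
rewrite -IH; first lia.
rewrite expnS in hm; lia.
Qed.

Lemma tri (b : nat -> nat) n :
  \sum_(1 <= l < n.+1) \sum_(l <= j < n.+1) b j = \sum_(1 <= j < n.+1) j * b j.
Proof.
elim: n => [|n IH]; first by rewrite !big_geq.
rewrite [RHS]big_nat_recr //= -IH.
rewrite (eq_big_nat _ _ (F2 := fun l => \sum_(l <= j < n.+1) b j + b n.+1)); last first.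
  by move=> l /andP[_ hl]; rewrite big_nat_recr.
rewrite big_split /= big_nat_recr //= [X in _ + X + _]big_geq // addn0.
by rewrite sum_nat_const_nat subn1.
Qed.

Lemma leq_sum_elem (F : nat -> nat) a b j : a <= j < b -> F j <= \sum_(a <= i < b) F i.
Proof.
move=> /andP[h1 h2]; rewrite (big_cat_nat h1 (ltnW h2)) /= [X in _ + X]big_ltn //.
lia.
Qed.

Lemma eq_from_sum (r : seq nat) (F G : nat -> nat) :
  (forall i, i \in r -> F i <= G i) ->
  \sum_(i <- r) G i <= \sum_(i <- r) F i -> forall i, i \in r -> F i = G i.
Proof.
elim: r => [|a r IH] hle hs i //.
rewrite !big_cons in hs.
have ha := hle a (mem_head _ _).
have hr : \sum_(j <- r) F j <= \sum_(j <- r) G j.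
  rewrite big_seq [X in _ <= X]big_seq; by apply: leq_sum => j hj; apply: hle; rewrite inE hj orbT.
rewrite inE => /orP[/eqP->|hi]; first lia.
apply: IH => //; first by move=> j hj; apply: hle; rewrite inE hj orbT.
lia.
Qed.

Lemma size_filter_sum (r : seq nat) (c : nat -> nat) :
  (forall v, c v <= 1) -> size [seq v <- r | c v == 1] = \sum_(v <- r) c v.
Proof.
move=> hc; elim: r => [|a r IH]; first by rewrite big_nil.
rewrite big_cons /=; have := hc a; case: (c a) => [|[|x]] //= _; by rewrite IH.
Qed.


Theorem lemma2p2 (g r : nat) (k : nat -> nat) :
  3 <= g -> 1 <= r -> inK (2 * g + 1) r k ->
  let d := 2 * g + 1 in
  let h := (trunc_log 2 (g + 1)).+1 in
  (s r + h.-1) %/ h <= sk d k /\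
  (h * sk d k = s r ->
     (forall l v, 1 <= l <= d -> kdot d k l v <= 1) /\
     (exists S : seq nat, uniq S /\ size S = s r %/ h /\
        forall v, kdot d k 1 v = (v \in S)) /\
     (forall v, s (\sum_(1 <= l < d.+1) kdot d k l v) = 0 \/
                s (\sum_(1 <= l < d.+1) kdot d k l v) = h)).
Proof.
move=> g3 r1 [mono sumr] d h.
set m := fun j => kext d k j - kext d k j.+1.
set c := fun v => kdot d k 1 v.
set T := fun v => \sum_(1 <= l < d.+1) kdot d k l v.
have hlt : g + 1 < 2 ^ h by apply: trunc_log_ltn.
have h3 : 3 <= h.
  rewrite ltnS; apply: trunc_log_max => //; lia.
have hpos : 0 < h by lia.
have F1 : forall l, 1 <= l <= d -> kext d k l.+1 <= kext d k l.
  move=> l hl; rewrite /kext; case: (ltnP l d) => hld.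
    by rewrite (ltnW hld); apply: mono; lia.
  by [].
have F2 : forall l, 1 <= l <= d -> kext d k l <= r.
  move=> l hl; rewrite /kext; case/andP: (hl) => _ ->.
  by rewrite -sumr; apply: leq_sum_elem; lia.
have F3 : forall j, 1 <= j <= d -> m j <= r.
  by move=> j hj; apply: leq_trans (leq_subr _ _) (F2 _ hj).
have F4 : forall j v, 1 <= j <= d -> r <= v -> bdigit (m j) v = 0.
  move=> j v hj hv; apply: bdigit_big.
  apply: leq_ltn_trans (F3 _ hj) _; apply: leq_trans (ltn_expl r (isT : 1 < 2)) _.
  by rewrite leq_exp2l.
have kdotS : forall l v, l <= d -> kdot d k l v = bdigit (m l) v + kdot d k l.+1 v.
  by move=> l v hl; rewrite /kdot big_ltn.
have F5 : forall l, 1 <= l <= d.+1 ->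
    kext d k l = \sum_(0 <= v < r) 2 ^ v * kdot d k l v.
  move=> l; move: {2}(d.+1 - l) (erefl (d.+1 - l)) => n; elim: n l => [|n IH] l hn hl.
    have -> : l = d.+1 by lia.
    rewrite /kext ltnn big1 // => v _; by rewrite /kdot big_geq // muln0.
  have hld : l <= d by lia.
  rewrite (eq_bigr (fun v => 2 ^ v * bdigit (m l) v + 2 ^ v * kdot d k l.+1 v)); last first.
    by move=> v _; rewrite kdotS // mulnDr.
  rewrite big_split /= -IH; [|lia|lia].
  rewrite -(@binexp r); last first.
    apply: leq_ltn_trans (F3 _ _) _; first lia.
    exact: ltn_expl.
  rewrite /m subnK //; apply: F1; lia.
have F6 : r = \sum_(0 <= v < r) 2 ^ v * T v.
  rewrite -{1}sumr.
  rewrite (eq_big_nat _ _ (F2 := fun l => \sum_(0 <= v < r) 2 ^ v * kdot d k l v)); last first.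
    move=> l hl; rewrite -F5; last lia.
    by rewrite /kext ifT //; lia.
  rewrite exchange_big_nat; apply: eq_bigr => v _.
  by rewrite /T big_distrr.
have F7 : sk d k = \sum_(0 <= v < r) c v.
  rewrite /sk.
  rewrite (eq_big_nat _ _ (F2 := fun l => \sum_(0 <= v < r) bdigit (m l) v)); last first.
    move=> l hl; rewrite (@sN _ r) //; apply: F3; lia.
  by rewrite exchange_big_nat.
have F8 : forall v, T v = \sum_(1 <= j < d.+1) j * bdigit (m j) v.
  by move=> v; rewrite /T /kdot tri.
have F10 : forall j, 1 <= j <= d -> s j <= h.
  move=> j hj; apply: s_boundB; rewrite expnS; lia.
have F11 : forall v, s (T v) <= h * c v.
  move=> v; rewrite F8; apply: leq_trans (s_sum _ _ _ _) _.
  rewrite /c /kdot big_distrr /= big_nat_cond [X in _ <= X]big_nat_cond.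
  apply: leq_sum => j /andP[/andP[h1 h2] _].
  rewrite /bdigit; case: (odd _); last by rewrite muln0 s0.
  rewrite !muln1; apply: F10; lia.
have MI1 : s r <= \sum_(0 <= v < r) s (T v).
  rewrite {1}F6; apply: leq_trans (s_sum _ _ _ _) _.
  by apply: leq_sum => v _; rewrite s_pow.
have MI2 : \sum_(0 <= v < r) s (T v) <= h * sk d k.
  rewrite F7 big_distrr; apply: leq_sum => v _; exact: F11.
split.
  rewrite -ltnS ltn_divLR //; have := leq_trans MI1 MI2; nia.
move=> E.
have cz : forall v, r <= v -> c v = 0.
  move=> v hv; rewrite /c /kdot big1_seq // => j; rewrite mem_index_iota => /andP[_ hj].
  apply: F4 => //; lia.
have Tz : forall v, r <= v -> T v = 0.
  move=> v hv; rewrite F8 big1_seq // => j; rewrite mem_index_iota => /andP[_ hj].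
  rewrite F4 ?muln0 //; lia.
have EQv : forall v, s (T v) = h * c v.
  move=> v; case: (ltnP v r) => hv; last by rewrite cz // Tz // s0 muln0.
  apply: (@eq_from_sum (index_iota 0 r) (fun v => s (T v)) (fun v => h * c v)).
  - move=> i _; exact: F11.
  - have -> : \sum_(0 <= i < r) h * c i = h * sk d k by rewrite F7 big_distrr.
    by rewrite E.
  - by rewrite mem_index_iota.
have c1 : forall v, c v <= 1.
  move=> v; rewrite leqNgt; apply/negP => hc.
  have hT : T v <= d * c v.
    rewrite F8 /c /kdot big_distrr /= big_nat_cond [X in _ <= X]big_nat_cond.
    apply: leq_sum => j /andP[/andP[h1 h2] _].
    apply: leq_mul => //; lia.
  have hc2 : c v <= 2 ^ (c v).-1.
    have := ltn_expl (c v).-1 (isT : 1 < 2); lia.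
  have hd : d * c v < 2 ^ h.+1 * c v.
    rewrite ltn_pmul2r; last lia.
    rewrite expnS; lia.
  have hT2 : T v < 2 ^ (h.+1 + (c v).-1).
    rewrite expnD; apply: leq_trans (leq_ltn_trans hT hd) _.
    by rewrite leq_mul2l hc2 orbT.
  have := s_boundA _ _ hT2; rewrite EQv; nia.
split.
  move=> l v hl; apply: leq_trans (c1 v).
  have hl1 : 1 <= l by lia.
  have hl2 : l <= d.+1 by lia.
  rewrite /c /kdot (big_cat_nat hl1 hl2) /=; exact: leq_addl.
split.
  exists [seq v <- iota 0 r | c v == 1]; split; first by rewrite filter_uniq // iota_uniq.
  split; first by rewrite size_filter_sum // -E mulKn // F7 /index_iota subn0.
  move=> v; rewrite mem_filter mem_iota add0n /=.
  case: (ltnP v r) => hv.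
    rewrite andbT; have := c1 v; rewrite /c; by case: (kdot d k 1 v) => [|[|]].
  by rewrite -/(c v) cz // andbF.
move=> v; rewrite -/(T v) EQv; have := c1 v; case: (c v) => [|[|]] //= _.
  by left; rewrite muln0.
by right; rewrite muln1.
Qed.
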